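(* For every set $J\subset\mathbb{Z}^+$, every integer $s\geqslant1$ and every $0<p<1$, $h_J(s,p)\leqslant h_J^0(s,p)$, where \[ h_J^0(s,p)=\frac{(1-p)^s}{p^2}\left(\frac{p^2}{(1-p)^{s+1}}+\frac{p}{s}\frac{1}{(1-p)^s}-\sum_{k\in J}k\frac{(k+s-2)!}{(k-1)!\,s!}p^k\right). \]
   Context: $\mathbb{Z}^+$ is the set of positive integers. For $J\subset\mathbb{Z}^+$, $s\in\mathbb{Z}^+$, $0<p<1$: $h_J(s,p)=\frac{(1-p)^s}{p^2}\sum_{k\in\mathbb{Z}^+\setminus J}\frac{k^2}{(k+s)^2}\binom{k+s}{k}p^k$. *)

(* Defs.v *)
From Stdlib Require Import Reals Arith Factorial.
From Coquelicot Require Import Coquelicot.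
Open Scope R_scope.

(* J ⊂ Z^+ is given by its indicator J : nat -> bool; only its values on
   k >= 1 matter.  Series a = sum_{n>=0} a n (Coquelicot).  We index
   k = n + 1 so that k ranges over Z^+. *)

Definition hterm (s : nat) (p : R) (k : nat) : R :=
  (INR k)^2 / (INR (k + s))^2 * Binomial.C (k + s) k * p ^ k.

Definition h (J : nat -> bool) (s : nat) (p : R) : R :=
  (1 - p) ^ s / p ^ 2 *
  Series (fun n => let k := S n in if J k then 0 else hterm s p k).

Definition h0term (s : nat) (p : R) (k : nat) : R :=
  INR k * INR (fact (k + s - 2)) / (INR (fact (k - 1)) * INR (fact s)) * p ^ k.

Definition h0 (J : nat -> bool) (s : nat) (p : R) : R :=
  (1 - p) ^ s / p ^ 2 *
  (p ^ 2 / (1 - p) ^ (s + 1) + p / INR s * (1 / (1 - p) ^ s)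
   - Series (fun n => let k := S n in if J k then h0term s p k else 0)).

(* Main.v *)
Require Import Defs.
From Stdlib Require Import Reals.
From Coquelicot Require Import Coquelicot.
From Stdlib Require Import Lra Lia Factorial.
Open Scope R_scope.

Definition F (t m : nat) : R :=
  INR (fact (m + t)) / (INR (fact m) * INR (fact t)).

Lemma INR_fact_pos k : 0 < INR (fact k).
Proof. apply lt_0_INR, lt_O_fact. Qed.

Lemma F_pos t m : 0 <= F t m.
Proof.
  unfold F. pose proof (INR_fact_pos (m+t)). pose proof (INR_fact_pos m).
  pose proof (INR_fact_pos t).
  apply Rle_mult_inv_pos; [lra|]. apply Rmult_lt_0_compat; lra.
Qed.

Lemma F_0 t : F t 0 = 1.
Proof.
  unfold F. simpl (0 + t)%nat. simpl (fact 0). simpl INR.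
  pose proof (INR_fact_pos t). field. lra.
Qed.

Lemma F_0' m : F 0 m = 1.
Proof.
  unfold F. rewrite Nat.add_0_r. simpl (fact 0). simpl INR.
  pose proof (INR_fact_pos m). field. lra.
Qed.

Lemma F_pascal t m : F (S t) (S m) = F (S t) m + F t (S m).
Proof.
  unfold F.
  replace (S m + S t)%nat with (S (S (m + t))) by lia.
  replace (m + S t)%nat with (S (m + t)) by lia.
  replace (S m + t)%nat with (S (m + t)) by lia.
  rewrite !fact_simpl. rewrite !mult_INR.
  pose proof (INR_fact_pos (m+t)). pose proof (INR_fact_pos m).
  pose proof (INR_fact_pos t).
  rewrite !S_INR, !plus_INR.
  pose proof (pos_INR m). pose proof (pos_INR t).
  field. repeat split; lra.
Qed.

Section P.
Variable p : R.
Hypothesis Hp : 0 < p < 1.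

Definition B (t N : nat) : R := sum_f_R0 (fun m => F t m * p ^ m) N.

Lemma B_id t N : (1 - p) * B (S t) N = B t N - F (S t) N * p ^ (S N).
Proof.
  induction N.
  - unfold B; simpl sum_f_R0. rewrite !F_0. simpl. ring.
  - unfold B in *. simpl sum_f_R0. rewrite Rmult_plus_distr_l, IHN.
    rewrite F_pascal. simpl. ring.
Qed.

Lemma B0_id N : (1 - p) * B 0 N = 1 - p ^ (S N).
Proof.
  induction N.
  - unfold B; simpl. rewrite F_0. ring.
  - unfold B in *. simpl sum_f_R0. rewrite Rmult_plus_distr_l, IHN.
    rewrite F_0'. simpl. ring.
Qed.

Lemma B_pos t N : 0 <= B t N.
Proof.
  unfold B. apply cond_pos_sum. intro m. apply Rmult_le_pos; [apply F_pos|].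
  apply pow_le; lra.
Qed.

Lemma B_le t N : (1 - p) * B (S t) N <= B t N.
Proof.
  rewrite B_id. pose proof (F_pos (S t) N).
  assert (0 <= p ^ S N) by (apply pow_le; lra).
  pose proof (Rmult_le_pos _ _ H H0). lra.
Qed.

Lemma B_bound t N : B t N <= / (1 - p) ^ (S t).
Proof.
  induction t.
  - pose proof (B0_id N). assert (0 <= p ^ S N) by (apply pow_le; lra).
    simpl. rewrite Rmult_1_r.
    apply (Rmult_le_reg_l (1 - p)); [lra|]. rewrite Rinv_r; lra.
  - pose proof (B_le t N).
    assert (0 < (1-p) ^ S t) by (apply pow_lt; lra).
    apply (Rmult_le_reg_l (1 - p)); [lra|].
    eapply Rle_trans; [exact H|]. eapply Rle_trans; [exact IHt|].
    right. change ((1-p) ^ S (S t)) with ((1-p) * (1-p) ^ S t).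
    field. lra.
Qed.
End P.

Lemma h0term_eq t p n :
  h0term (S t) p (S n) =
  p * (F (S t) n * p ^ n) - INR t / INR (S t) * p * (F t n * p ^ n).
Proof.
  unfold h0term, F.
  replace (S n + S t - 2)%nat with (n + t)%nat by lia.
  replace (S n - 1)%nat with n by lia.
  replace (n + S t)%nat with (S (n + t)) by lia.
  rewrite !fact_simpl. rewrite !mult_INR.
  pose proof (INR_fact_pos (n+t)). pose proof (INR_fact_pos n).
  pose proof (INR_fact_pos t).
  rewrite !S_INR, !plus_INR.
  pose proof (pos_INR n). pose proof (pos_INR t).
  simpl pow. field. repeat split; lra.
Qed.

Lemma hterm_le t p n : 0 < p ->
  0 <= hterm (S t) p (S n) <= h0term (S t) p (S n).
Proof.
  intro Hp.
  set (K := INR (fact (n + t)) / (INR (fact n) * INR (fact (S t))) * p ^ S n).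
  assert (HK : 0 <= K).
  { unfold K. pose proof (INR_fact_pos (n+t)). pose proof (INR_fact_pos n).
    pose proof (INR_fact_pos (S t)). apply Rmult_le_pos.
    apply Rle_mult_inv_pos; [lra|]. apply Rmult_lt_0_compat; lra.
    apply pow_le; lra. }
  assert (E1 : h0term (S t) p (S n) = K * INR (S n)).
  { unfold h0term, K.
    replace (S n + S t - 2)%nat with (n + t)%nat by lia.
    replace (S n - 1)%nat with n by lia.
    pose proof (INR_fact_pos (n+t)). pose proof (INR_fact_pos n).
    pose proof (INR_fact_pos (S t)). field. lra. }
  assert (E2 : hterm (S t) p (S n) =
     K * (INR (S n) * INR (S (n + t)) / INR (S (S (n + t))))).
  { unfold hterm, K, Binomial.C.
    replace (S n + S t - S n)%nat with (S t) by lia.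
    replace (S n + S t)%nat with (S (S (n + t))) by lia.
    rewrite !fact_simpl. rewrite !mult_INR.
    pose proof (INR_fact_pos (n+t)). pose proof (INR_fact_pos n).
    pose proof (INR_fact_pos (S t)).
    rewrite !S_INR, !plus_INR.
    pose proof (pos_INR n). pose proof (pos_INR t).
    pose proof (INR_fact_pos t). field. repeat split; lra. }
  rewrite E1, E2.
  rewrite !S_INR, !plus_INR.
  pose proof (pos_INR n). pose proof (pos_INR t).
  assert (0 <= (INR n + 1) * (INR n + INR t + 1) / (INR n + INR t + 1 + 1)).
  { apply Rle_mult_inv_pos; nra. }
  assert ((INR n + 1) * (INR n + INR t + 1) / (INR n + INR t + 1 + 1) <= INR n + 1).
  { apply (Rmult_le_reg_r (INR n + INR t + 1 + 1)); [lra|].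
    unfold Rdiv. rewrite Rmult_assoc, Rinv_l by lra. nra. }
  split; [apply Rmult_le_pos; lra| apply Rmult_le_compat_l; lra].
Qed.

Lemma partial_eq t p N :
  sum_f_R0 (fun n => h0term (S t) p (S n)) N =
  p * B p (S t) N - INR t / INR (S t) * p * B p t N.
Proof.
  induction N.
  - unfold B. simpl sum_f_R0. rewrite h0term_eq. simpl pow. ring.
  - simpl sum_f_R0. rewrite IHN, h0term_eq. unfold B. simpl sum_f_R0. simpl pow. ring.
Qed.

Lemma partial_bound t p N : 0 < p < 1 ->
  sum_f_R0 (fun n => h0term (S t) p (S n)) N <=
  p ^ 2 / (1 - p) ^ (S t + 1) + p / INR (S t) * (1 / (1 - p) ^ (S t)).
Proof.
  intro Hp. rewrite partial_eq.
  pose proof (B_le p Hp t N) as H1.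
  pose proof (B_bound p Hp (S t) N) as H2.
  pose proof (B_pos p Hp (S t) N) as H3.
  set (X := B p (S t) N) in *. set (Y := B p t N) in *.
  set (Q := (1 - p) ^ S t).
  assert (HQ : 0 < Q) by (apply pow_lt; lra).
  replace ((1 - p) ^ (S t + 1)) with (Q * (1 - p))
    by (unfold Q; rewrite pow_add; simpl; ring).
  change ((1 - p) ^ S (S t)) with ((1 - p) * Q) in H2.
  pose proof (pos_INR t). rewrite S_INR in *.
  set (tt := INR t) in *.
  assert (Hc : tt / (tt + 1) * p * Y >= tt / (tt + 1) * p * ((1-p) * X)).
  { apply Rle_ge, Rmult_le_compat_l; [|lra].
    apply Rmult_le_pos; [apply Rle_mult_inv_pos; lra|lra]. }
  eapply Rle_trans with (p * X - tt / (tt + 1) * p * ((1 - p) * X)); [lra|].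
  replace (p * X - tt / (tt + 1) * p * ((1 - p) * X)) with
      (p * (1 + tt * p) / (tt + 1) * X) by (field; lra).
  replace (p ^ 2 / (Q * (1 - p)) + p / (tt + 1) * (1 / Q)) with
      (p * (1 + tt * p) / (tt + 1) * / ((1 - p) * Q)) by (field; lra).
  apply Rmult_le_compat_l; [|exact H2].
  apply Rle_mult_inv_pos; [|lra]. apply Rmult_le_pos; nra.
Qed.

Lemma ex_le (u v : nat -> R) : (forall n, 0 <= u n <= v n) -> ex_series v -> ex_series u.
Proof.
  intros H Hv. apply (ex_series_le u v); [|exact Hv].
  intro n. change (norm (u n)) with (Rabs (u n)).
  rewrite Rabs_pos_eq; apply H.
Qed.

Theorem lemma3 (J : nat -> bool) (s : nat) (p : R) :
  (1 <= s)%nat -> 0 < p < 1 -> h J s p <= h0 J s p.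
Proof.
  intros Hs Hp. destruct s as [|t]; [lia|].
  set (T := p ^ 2 / (1 - p) ^ (S t + 1) + p / INR (S t) * (1 / (1 - p) ^ (S t))).
  set (a := fun n => h0term (S t) p (S n)).
  set (aJ := fun n => if J (S n) then h0term (S t) p (S n) else 0).
  set (aN := fun n => if J (S n) then 0 else h0term (S t) p (S n)).
  set (bN := fun n => if J (S n) then 0 else hterm (S t) p (S n)).
  assert (Ha : forall n, 0 <= a n).
  { intro n. pose proof (hterm_le t p n (proj1 Hp)). unfold a. lra. }
  assert (Hbnd : forall N, sum_f_R0 a N <= T) by (intro N; apply partial_bound; exact Hp).
  destruct (growing_cv (sum_f_R0 a)) as [l Hl].
  { intro n. simpl. pose proof (Ha (S n)). lra. }
  { exists T. intros x [i ->]. apply Hbnd. }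
  assert (Hexa : ex_series a) by (apply ex_series_Reals_1; exists l; exact Hl).
  assert (HSa : Series a = l).
  { apply is_series_unique. apply is_series_Reals. exact Hl. }
  assert (HlT : l <= T).
  { apply (Rle_cv_lim Hbnd Hl). intros eps Heps. exists 0%nat. intros.
    unfold Rdist. rewrite Rminus_diag, Rabs_R0. exact Heps. }
  assert (HaJ : ex_series aJ).
  { apply (ex_le aJ a); [|exact Hexa]. intro n. unfold aJ.
    pose proof (Ha n). unfold a in *. destruct (J (S n)); lra. }
  assert (HaN : ex_series aN).
  { apply (ex_le aN a); [|exact Hexa]. intro n. unfold aN.
    pose proof (Ha n). unfold a in *. destruct (J (S n)); lra. }
  assert (Hsplit : Series aJ + Series aN = Series a).
  { rewrite <- Series_plus by assumption. apply Series_ext. intro n.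
    unfold aJ, aN, a. destruct (J (S n)); ring. }
  assert (HbN : Series bN <= Series aN).
  { apply Series_le; [|exact HaN]. intro n. unfold bN, aN.
    pose proof (hterm_le t p n (proj1 Hp)). destruct (J (S n)); lra. }
  unfold h, h0. fold T.
  change (Series (fun n => let k := S n in if J k then 0 else hterm (S t) p k))
    with (Series bN).
  change (Series (fun n => let k := S n in if J k then h0term (S t) p k else 0))
    with (Series aJ).
  apply Rmult_le_compat_l.
  - apply Rle_mult_inv_pos. apply pow_le; lra. apply pow_lt; lra.
  - fold bN aJ. change (Series bN <= T - Series aJ). lra.
Qed.
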